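(* Assume that the kinetic system $(\Omega, \mathcal R, \mathcal K)$ satisfies the detailed balance property. Let $U \subset \Omega$ and $V := \Omega \setminus U$. Consider the reduced kinetic system $(V, \mathcal R_V, \mathcal K[n_U])$ where $n_U := \{n_s\}_{s \in U}$ with $n_s > 0$ for every $s \in U$. 1. If $U \cap \mathcal D(\mathcal C_V) = \emptyset$, then $(V, \mathcal R_V, \mathcal K[n_U])$ satisfies the detailed balance property. 2. If $U \cap \mathcal D(\mathcal C_V) \neq \emptyset$ and $n_s = e^{-E(s)}$ for all $s \in U \cap \mathcal D(\mathcal C_V)$, for an energy $E \in \mathbb R^N$ of the kinetic system $(\Omega, \mathcal R, \mathcal K)$, then $(V, \mathcal R_V, \mathcal K[n_U])$ satisfies the detailed balance property.
   Context: A chemical network $(\Omega,\mathcal R)$ has substances $\Omega=\{1,\dots,N\}$ and reactions $\mathcal R\subset \mathbb Z^N\setminus\{0\}$; for $R\in\mathcal R$, $I(R)=\{i: R(i)<0\}$, $F(R)=\{i:R(i)>0\}$. It is bidirectional if $R\in\mathcal R$ implies $-R\in\mathcal R$; $\mathcal R_s$ contains one representative of each pair $\{R,-R\}$, and $\textbf{R}\in\mathbb Z^{N\times|\mathcal R_s|}$ is the matrix whose columns are the reactions in $\mathcal R_s$. The space of cycles is $\mathcal C=\ker \textbf{R}$. A kinetic system $(\Omega,\mathcal R,\mathcal K)$ is a bidirectional network with rates $K_R=\mathcal K(R)>0$ (mass action kinetics). It satisfies the detailed balance property if there is $\overline N\in\mathbb R_+^N$ with $K_R\prod_{i\in I(R)}\overline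 N_i^{-R(i)}=K_{-R}\prod_{i\in F(R)}\overline N_i^{R(i)}$ for all $R\in\mathcal R_s$. An energy of $(\Omega,\mathcal R,\mathcal K)$ is any solution $E\in\mathbb R^N$ of $\textbf{R}^T E=w$, where $w(i)=\log(K_{-R_i}/K_{R_i})$ for the columns $R_i$ of $\textbf{R}$. Reduction: for $U\subset\Omega$ nonempty, $V=\Omega\setminus U$, $\pi_V$ denotes projection onto the coordinates in $V$; the reduced reactions are $\mathcal R_V=\{\pi_V \overline R\neq 0:\overline R\in\mathcal R\}$, with reaction matrix $\textbf{R}_V$ and space of cycles $\mathcal C_V=\ker\textbf{R}_V$; the reduced rates are $\mathcal K[n_U](R)=\sum_{\overline R\in\mathcal R:\ \pi_V\overline R=R} K_{\overline R}\prod_{s\in U\cap I(\overline R)} n_s^{-\overline R(s)}$. Finally $\mathcal D(\mathcal C_V):=\{i\in\Omega: \exists R\in\mathcal R \text{ such that } \pi_V R \text{ belongs to a cycle in } \mathcal C_V \text{ and } R(i)\neq 0\}$. *)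

(* Defs.v *)
From HB Require Import structures.
From mathcomp Require Import all_boot all_order all_algebra.
From mathcomp Require Import reals sequences exp.

Set Implicit Arguments.
Unset Strict Implicit.
Unset Printing Implicit Defensive.

Import Order.TTheory GRing.Theory Num.Theory.
Local Open Scope ring_scope.

Definition rxn (T : finType) := {ffun T -> int}.

Definition reactants (T : finType) (R : rxn T) : {set T} := [set i | R i < 0].
Definition products (T : finType) (R : rxn T) : {set T} := [set i | 0 < R i].

Definition bidirectional_network (T : finType) (Rs : seq (rxn T)) : Prop :=
  [/\ uniq Rs, 0 \notin Rs & forall R, R \in Rs -> - R \in Rs].

Definition kinetic_system (K : realType) (T : finType) (Rs : seq (rxn T))
  (k : rxn T -> K) : Prop :=
  bidirectional_network Rs /\ (forall R, R \in Rs -> 0 < k R).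

Definition representatives (T : finType) (Rs Rss : seq (rxn T)) : Prop :=
  [/\ uniq Rss, {subset Rss <= Rs} &
      forall R, R \in Rs -> (R \in Rss) (+) (- R \in Rss)].

(* Detailed balance (mass action).  Stated for every R in Rs; the equation
   for -R is the equation for R with both sides swapped, so this is the same
   as requiring it for R in Rs_s. *)
Definition detailed_balance (K : realType) (T : finType) (Rs : seq (rxn T))
  (k : rxn T -> K) : Prop :=
  exists Nb : T -> K, (forall i, 0 < Nb i) /\
    forall R, R \in Rs ->
      k R * \prod_(i in reactants R) Nb i ^ (- R i)
      = k (- R) * \prod_(i in products R) Nb i ^ (R i).

(* Energy: solution E of R^T E = w, w(R) = log (K_{-R} / K_R).  Row R of
   R^T E is sum_i R(i) E(i).  Stated for every R in Rs (the equation for -R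
   is the negation of the one for R). *)
Definition energy (K : realType) (T : finType) (Rs : seq (rxn T))
  (k : rxn T -> K) (E : T -> K) : Prop :=
  forall R, R \in Rs -> \sum_i (R i)%:~R * E i = ln (k (- R) / k R).

Definition Vtype (T : finType) (U : {set T}) := {x : T | x \notin U}.

Definition projV (T : finType) (U : {set T}) (R : rxn T) : rxn (Vtype U) :=
  [ffun v : Vtype U => R (val v)].

Definition red_rxns (T : finType) (U : {set T}) (Rs : seq (rxn T))
  : seq (rxn (Vtype U)) :=
  undup [seq projV U Rb | Rb <- Rs & projV U Rb != 0].

Definition red_rates (K : realType) (T : finType) (U : {set T})
  (Rs : seq (rxn T)) (k : rxn T -> K) (n : T -> K) (r : rxn (Vtype U)) : K :=
  \sum_(Rb <- Rs | projV U Rb == r)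
     k Rb * \prod_(s in U :&: reactants Rb) n s ^ (- Rb s).

(* gamma is in the space of cycles C = ker R, where the columns of R are
   the reactions of the representative sequence Rss. *)
Definition is_cycle (K : realType) (T : finType) (Rss : seq (rxn T))
  (g : 'I_(size Rss) -> K) : Prop :=
  forall i : T, \sum_(j < size Rss) ((nth 0 Rss j) i)%:~R * g j = 0.

(* i \in D(C_V): there is R in Rs such that pi_V R belongs to a cycle of
   C_V (i.e. pi_V R is, up to orientation, a column of R_V carrying a
   nonzero coefficient in some cycle) and R(i) != 0.  RVs is the chosen
   representative sequence (R_V)_s of the reduced network. *)
Definition in_D (K : realType) (T : finType) (U : {set T}) (Rs : seq (rxn T))
  (RVs : seq (rxn (Vtype U))) (i : T) : Prop :=
  exists2 R, R \in Rs &
    (exists g : 'I_(size RVs) -> K, exists j : 'I_(size RVs),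
       [/\ @is_cycle K _ RVs g, g j != 0 &
           (projV U R == nth 0 RVs j) || (projV U R == - nth 0 RVs j)])
    /\ R i != 0.

(* Main.v *)
Require Import Defs.
From HB Require Import structures.
From mathcomp Require Import all_boot all_order all_algebra.
From mathcomp Require Import reals sequences exp.
From mathcomp Require Import lra ring.
Import Order.TTheory GRing.Theory Num.Theory.
Set Implicit Arguments.
Unset Strict Implicit.
Local Open Scope ring_scope.
Lemma expR_intM (K : realType) (x : K) (z : int) : expR (z%:~R * x) = expR x ^ z.
Proof.
case: z => m; first by rewrite expRM_natl.
by rewrite NegzE mulrNz mulNr expRN expRM_natl exprnN.
Qed.

Lemma split_sum (K : realType) (T : finType) (S : {set T}) (R : rxn T) (y : T -> K) :
  \sum_(i in S) (R i)%:~R * y i =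
  \sum_(i in S :&: reactants R) (R i)%:~R * y i +
  \sum_(i in S :&: products R) (R i)%:~R * y i.
Proof.
rewrite (bigID (fun i => R i < 0)) /=; congr (_ + _).
  by apply: eq_bigl => i; rewrite !inE.
rewrite (bigID (fun i => 0 < R i)) /= [X in _ + X]big1 ?addr0.
  by apply: eq_bigl => i; rewrite !inE; case: (ltrgt0P (R i)); rewrite ?andbT ?andbF.
move=> i; case: (ltrgt0P (R i)) => [h|h|->] //=; rewrite ?andbF //.
by rewrite mul0r.
Qed.

Lemma sum_V (K : realType) (T : finType) (U : {set T}) (f : T -> K) :
  \sum_(i | i \notin U) f i = \sum_(v : Vtype U) f (val v).
Proof.
rewrite (reindex_omap (val : Vtype U -> T) insub); last first.
  by move=> i iU; rewrite insubT.
apply: eq_bigl=> -[i iA]/=; rewrite insubT ?iA /=; apply/eqP; congr Some; exact: val_inj.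
Qed.

Lemma lin_alg (F : fieldType) (m : nat) (J : finType) (a : 'I_m -> J -> F) (w : 'I_m -> F) :
  (forall g : 'I_m -> F, (forall j, \sum_i a i j * g i = 0) -> \sum_i g i * w i = 0) ->
  exists x : J -> F, forall i, \sum_j a i j * x j = w i.
Proof.
move=> H.
pose B : 'M[F]_(#|J|, m) := \matrix_(c, i) a i (enum_val c).
pose wr : 'rV[F]_m := \row_i w i.
have : (wr <= B)%MS.
  rewrite submxE; move: (mulmx_coker B); move: (cokermx B) => C hC; apply/eqP/matrixP => r c; rewrite !mxE.
  have := H (fun i => C i c) => /(_ _)/wrap[].
    move=> j; have := congr1 (fun M : 'M[F]_(#|J|, m) => M (enum_rank j) c) hC.
    rewrite !mxE => h; apply: etrans h; apply: eq_bigr => i _; by rewrite /B mxE enum_rankK.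
  move=> h; apply: etrans h; apply: eq_bigr => i _; by rewrite /wr mxE mulrC.
case/submxP => D hD.
exists (fun j => D 0 (enum_rank j)) => i.
have := congr1 (fun M : 'M[F]_(1, m) => M 0 i) hD; rewrite !mxE => ->.
rewrite (reindex (fun c : 'I_#|J| => enum_val c)) /=.
  by apply: eq_bigr => c _; rewrite /B mxE enum_valK mulrC.
by exists enum_rank => c _; rewrite ?enum_valK ?enum_rankK.
Qed.

Lemma sum_seq_gt0 (K : realType) (I : eqType) (s : seq I) (P : pred I) (F : I -> K) x :
  (forall y, y \in s -> 0 < F y) -> x \in s -> P x -> 0 < \sum_(y <- s | P y) F y.
Proof.
elim: s => // a s IH hF; rewrite inE big_cons => /orP[/eqP->|xs] Px.
  rewrite Px.
  have h1 : 0 < F a by apply: hF; exact: mem_head.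
  have h2 : 0 <= \sum_(y <- s | P y) F y.
    by rewrite big_seq_cond; apply: sumr_ge0 => y /andP[ys _]; apply/ltW/hF; rewrite inE ys orbT.
  lra.
have h1 : 0 < \sum_(y <- s | P y) F y by apply: IH => // y ys; apply: hF; rewrite inE ys orbT.
case: (P a) => //.
have h2 : 0 < F a by apply: hF; exact: mem_head.
lra.
Qed.

Lemma projV_opp (T : finType) (U : {set T}) (R : rxn T) : projV U (- R) = - projV U R.
Proof. by apply/ffunP => v; rewrite !ffunE. Qed.

Lemma reactantsN (T : finType) (R : rxn T) : reactants (- R) = products R.
Proof. by apply/setP => i; rewrite !inE ffunE oppr_lt0. Qed.

Lemma mem_red (T : finType) (U : {set T}) (Rs : seq (rxn T)) r :
  r \in red_rxns U Rs <-> exists2 Rb, Rb \in Rs & projV U Rb = r /\ r != 0.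
Proof.
rewrite /red_rxns mem_undup; split.
  case/mapP => Rb; rewrite mem_filter => /andP[h1 h2] ->.
  by exists Rb.
case=> Rb h1 [h2 h3]; apply/mapP; exists Rb => //.
by rewrite mem_filter h1 h2 h3.
Qed.

Lemma red_opp (T : finType) (U : {set T}) (Rs : seq (rxn T)) r :
  (forall R, R \in Rs -> - R \in Rs) ->
  r \in red_rxns U Rs -> - r \in red_rxns U Rs.
Proof.
move=> hN /mem_red [Rb h1 [h2 h3]]; apply/mem_red; exists (- Rb); first exact: hN.
by rewrite projV_opp h2 oppr_eq0.
Qed.

Definition term (K : realType) (T : finType) (U : {set T}) (k : rxn T -> K) (n : T -> K) (Rb : rxn T) :=
  k Rb * \prod_(s in U :&: reactants Rb) n s ^ (- Rb s).

Lemma red_rates_opp (K : realType) (T : finType) (U : {set T}) (Rs : seq (rxn T))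
  (k : rxn T -> K) (n : T -> K) r :
  uniq Rs -> (forall R, R \in Rs -> - R \in Rs) ->
  red_rates Rs k n (- r) = \sum_(Rb <- Rs | projV U Rb == r) term U k n (- Rb).
Proof.
move=> hu hN.
have hp : perm_eq Rs (map (fun R => - R) Rs).
  apply: uniq_perm => //; first by rewrite map_inj_uniq //; exact: oppr_inj.
  move=> x; apply/idP/mapP => [xR|[y yR ->]]; last exact: hN.
  by exists (- x); rewrite ?opprK //; apply: hN.
rewrite /red_rates (perm_big _ hp) big_map; apply: eq_bigl => Rb.
by rewrite projV_opp eqr_opp.
Qed.

Lemma term_gt0 (K : realType) (T : finType) (U : {set T}) (k : rxn T -> K) (n : T -> K) Rs Rb :
  kinetic_system Rs k -> (forall s, s \in U -> 0 < n s) -> Rb \in Rs -> 0 < term U k n Rb.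
Proof.
move=> [_ hk] hn hR; rewrite /term mulr_gt0 ?hk //.
apply: prodr_gt0 => s; rewrite inE => /andP[sU _]; exact/exprz_gt0/hn.
Qed.

Lemma red_rates_gt0 (K : realType) (T : finType) (U : {set T}) (Rs : seq (rxn T))
  (k : rxn T -> K) (n : T -> K) r :
  kinetic_system Rs k -> (forall s, s \in U -> 0 < n s) ->
  r \in red_rxns U Rs -> 0 < red_rates Rs k n r.
Proof.
move=> hks hn /mem_red [Rb h1 [h2 h3]].
apply: (@sum_seq_gt0 _ _ _ _ (term U k n) Rb) => //; last by rewrite h2.
by move=> y yR; apply: term_gt0 hks hn yR.
Qed.

Lemma term_step (K : realType) (T : finType) (U : {set T}) (k : rxn T -> K) (n : T -> K)
  (E : T -> K) (Rb : rxn T) :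
  k Rb = k (- Rb) * expR (- \sum_i (Rb i)%:~R * E i) ->
  (forall s, s \in U -> Rb s != 0 -> n s = expR (- E s)) ->
  term U k n Rb = term U k n (- Rb) *
     expR (- \sum_(v : Vtype U) (Rb (val v))%:~R * E (val v)).
Proof.
move=> hk hn.
have e1 : \prod_(s in U :&: reactants Rb) n s ^ (- Rb s) =
          expR (\sum_(s in U :&: reactants Rb) (Rb s)%:~R * E s).
  rewrite expR_sum; apply: eq_bigr => s; rewrite !inE => /andP[sU sI].
  by rewrite hn ?ltr0_neq0 // -expR_intM mulrNz mulrNN.
have e2 : \prod_(s in U :&: reactants (- Rb)) n s ^ (- (- Rb) s) =
          expR (- \sum_(s in U :&: products Rb) (Rb s)%:~R * E s).
  rewrite reactantsN -sumrN expR_sum; apply: eq_bigr => s; rewrite !inE => /andP[sU sI].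
  by rewrite hn ?lt0r_neq0 // ffunE opprK -expR_intM mulrN.
rewrite /term e1 e2 hk (bigID (fun i => i \in U)) /= sum_V (split_sum U Rb E).
rewrite -!mulrA -!expRD; congr (_ * expR _).
lra.
Qed.

Lemma prod_expR (K : realType) (I : finType) (A : {set I}) (z : I -> int) (y : I -> K) :
  \prod_(i in A) expR (y i) ^ z i = expR (\sum_(i in A) (z i)%:~R * y i).
Proof. by rewrite expR_sum; apply: eq_bigr => i _; rewrite expR_intM. Qed.

Lemma split_sumT (K : realType) (T : finType) (R : rxn T) (y : T -> K) :
  \sum_i (R i)%:~R * y i =
  \sum_(i in reactants R) (R i)%:~R * y i + \sum_(i in products R) (R i)%:~R * y i.
Proof.
have := split_sum [set: T] R y; rewrite !setTI => <-.
by apply: eq_bigl => i; rewrite in_setT.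
Qed.

Lemma sumN_int (K : realType) (I : finType) (A : {set I}) (z : I -> int) (y : I -> K) :
  \sum_(i in A) (- z i)%:~R * y i = - \sum_(i in A) (z i)%:~R * y i.
Proof. by rewrite -sumrN; apply: eq_bigr => i _; rewrite mulrNz mulNr. Qed.

Lemma core (K : realType) (T : finType) (Rs : seq (rxn T)) (k : rxn T -> K)
  (U : {set T}) (n : T -> K) (RVs : seq (rxn (Vtype U))) (E : T -> K) :
  kinetic_system Rs k -> (forall s, s \in U -> 0 < n s) ->
  representatives (red_rxns U Rs) RVs ->
  (forall R, R \in Rs -> k R = k (- R) * expR (- \sum_i (R i)%:~R * E i)) ->
  (forall s, s \in U -> @in_D K _ U Rs RVs s -> n s = expR (- E s)) ->
  detailed_balance (red_rxns U Rs) (red_rates Rs k n).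
Proof.
move=> hks hn [hu hsub hrep] hk hD.
have [[huniq _ hN] _] := hks.
set KR := red_rates Rs k n.
have Kpos : forall r, r \in red_rxns U Rs -> 0 < KR r.
  by move=> r; apply: red_rates_gt0.
have step : forall r : rxn (Vtype U),
    (forall Rb, Rb \in Rs -> projV U Rb == r ->
       forall s, s \in U -> Rb s != 0 -> n s = expR (- E s)) ->
    KR r = KR (- r) * expR (- \sum_v (r v)%:~R * E (val v)).
  move=> r hr; rewrite /KR red_rates_opp // big_distrl /=.
  rewrite /red_rates big_seq_cond [RHS]big_seq_cond; apply: eq_bigr => Rb /andP[RbR hpr].
  have := term_step (hk Rb RbR) (hr Rb RbR hpr); rewrite /term => ->.
  congr (_ * expR (- _)); apply: eq_bigr => v _; by rewrite -(eqP hpr) ffunE.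
pose a := fun (j : 'I_(size RVs)) (v : Vtype U) => ((nth 0 RVs j) v)%:~R : K.
pose w := fun j : 'I_(size RVs) => ln (KR (nth 0 RVs j) / KR (- nth 0 RVs j)).
have [x hx] : exists x : Vtype U -> K, forall j, \sum_v a j v * x v = w j.
  apply: lin_alg => g hg.
  have hcyc : is_cycle g by exact: hg.
  transitivity (\sum_j g j * - \sum_v a j v * E (val v)).
    apply: eq_bigr => j _; case: (eqVneq (g j) 0) => [->|gj]; first by rewrite !mul0r.
    congr (_ * _); rewrite /w.
    have rin : nth 0 RVs j \in red_rxns U Rs by apply: hsub; apply: mem_nth.
    rewrite step.
      rewrite mulrAC divff ?mul1r ?expRK //; apply: lt0r_neq0; apply: Kpos.
      by apply: red_opp.
    move=> Rb RbR hpr s sU Rbs; apply: hD => //.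
    exists Rb => //; split => //; exists g, j; split => //; by rewrite hpr.
  rewrite (eq_bigr (fun j => - \sum_v g j * (a j v * E (val v)))); last first.
    by move=> j _; rewrite mulrN mulr_sumr.
  rewrite sumrN exchange_big /= big1 ?oppr0 // => v _.
  rewrite (eq_bigr (fun j => (a j v * g j) * E (val v))); last first.
    by move=> j _; rewrite mulrA [g j * _]mulrC.
  by rewrite -mulr_suml hg mul0r.
exists (fun v => expR (x v)); split; first by move=> v; exact: expR_gt0.
move=> r rin.
have rNin := red_opp hN rin.
have hKr : expR (\sum_v (r v)%:~R * x v) = KR r / KR (- r).
  have := hrep r rin; case/boolP: (r \in RVs) => [rR _|rR /= nrR].
    have jlt : (index r RVs < size RVs)%N by rewrite index_mem.
    have := hx (Ordinal jlt); rewrite /a /w /= (nth_index 0 rR) => ->.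
    by rewrite lnK // posrE divr_gt0 // Kpos.
  have jlt : (index (- r) RVs < size RVs)%N by rewrite index_mem.
  have := hx (Ordinal jlt); rewrite /a /w /= (nth_index 0 nrR) opprK.
  under eq_bigr do rewrite ffunE mulrNz mulNr.
  rewrite sumrN => /(congr1 (fun t => - t)); rewrite opprK => ->.
  by rewrite expRN lnK ?invf_div // posrE divr_gt0 // Kpos.
have hKr' : KR r = KR (- r) * expR (\sum_v (r v)%:~R * x v).
  by rewrite hKr mulrC divfK // lt0r_neq0 // Kpos.
rewrite hKr' !prod_expR sumN_int -!mulrA -!expRD (split_sumT r x).
congr (_ * expR _); lra.
Qed.

Theorem proposition5p1 (K : realType) (N : nat) (Rs : seq (rxn 'I_N))
  (k : rxn 'I_N -> K) (U : {set 'I_N}) (n : 'I_N -> K)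
  (RVs : seq (rxn (Vtype U))) :
  kinetic_system Rs k -> detailed_balance Rs k ->
  U != set0 ->
  (forall s, s \in U -> 0 < n s) ->
  representatives (red_rxns U Rs) RVs ->
  ((forall s, s \in U -> ~ @in_D K _ U Rs RVs s) ->
     detailed_balance (red_rxns U Rs) (red_rates Rs k n))
  /\
  (forall E : 'I_N -> K, energy Rs k E ->
     (exists2 s, s \in U & @in_D K _ U Rs RVs s) ->
     (forall s, s \in U -> @in_D K _ U Rs RVs s -> n s = expR (- E s)) ->
     detailed_balance (red_rxns U Rs) (red_rates Rs k n)).
Proof.
move=> hks hdb _ hn hrep.
have [[_ _ hN] hkpos] := hks.
split.
  move=> hnD; case: hdb => Nb [Nbpos hNb].
  apply: (core (RVs := RVs) (E := fun i => - ln (Nb i))) => //; last first.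
    by move=> s sU sD; exfalso; exact: hnD s sU sD.
  move=> R RR; have := hNb R RR.
  have eN : forall i, Nb i = expR (ln (Nb i)) by move=> i; rewrite lnK // posrE.
  rewrite (eq_bigr (fun i => expR (ln (Nb i)) ^ (- R i))); last by move=> i _; rewrite -eN.
  rewrite [in X in _ = X -> _](eq_bigr (fun i => expR (ln (Nb i)) ^ (R i))); last by move=> i _; rewrite -eN.
  rewrite !prod_expR sumN_int => h.
  set A := \sum_(i in reactants R) (R i)%:~R * ln (Nb i) in h *.
  have e : k R = k R * expR (- A) * expR (- - A) by rewrite -mulrA expRxMexpNx_1 mulr1.
  rewrite {1}e h -mulrA -expRD.
  congr (_ * expR _).
  rewrite [in RHS](eq_bigr (fun i => - ((R i)%:~R * ln (Nb i)))); last by move=> i _ /=; ring.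
  rewrite sumrN opprK (split_sumT R (fun i => ln (Nb i))) -/A; lra.
move=> E hE _ hnE; apply: (core (RVs := RVs) (E := E)) => //.
move=> R RR.
have k1 := hkpos R RR; have k2 := hkpos (- R) (hN R RR).
rewrite (hE R RR) expRN lnK ?posrE ?divr_gt0 // invf_div mulrC divfK //.
exact: lt0r_neq0.
Qed.
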